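(* In the two-shock setting ($v_\pm>0$, $u_->u_+$, intermediate state $(u_*^{\epsilon_1\epsilon_2},v_*^{\epsilon_1\epsilon_2})$, shock speeds $\sigma_1^{\epsilon_1\epsilon_2},\sigma_2^{\epsilon_1\epsilon_2}$), $$\lim_{\epsilon_1,\epsilon_2\to0}\int_{\sigma_1^{\epsilon_1\epsilon_2}}^{\sigma_2^{\epsilon_1\epsilon_2}}v_*^{\epsilon_1\epsilon_2}\,d\xi=\sigma(v_+-v_-)-(u_+v_+-u_-v_-)=\tfrac12(v_-+v_+)(u_--u_+),\qquad \sigma=\tfrac12(u_-+u_+).$$
   Context: Perturbed Brio system: $u_t+(\tfrac12u^2+\tfrac12\epsilon_1v^2)_x=0$, $v_t+(uv-\epsilon_2v)_x=0$, $\epsilon_1,\epsilon_2>0$, $v>0$, with Riemann data $(u_-,v_-)$ for $x<0$, $(u_+,v_+)$ for $x>0$. A two-shock Riemann solution is one with an intermediate state $(u_*,v_* )$, $v_*>\max(v_-,v_+)$, $u_+<u_*<u_-$, such that $$u_*=u_-+(v_*-v_-)\frac{\epsilon_2-\sqrt{\epsilon_2^2+4\epsilon_1(v_*+v_-)^2}}{v_*+v_-},\qquad u_+=u_*+(v_+-v_* )\frac{\epsilon_2+\sqrt{\epsilon_2^2+4\epsilon_1(v_*+v_+)^2}}{v_*+v_+},$$ with shock speeds $\sigma_1=u_-+\frac{v_*(u_*-u_-)}{v_*-v_-}-\epsilon_2$ and $\sigma_2=u_++\frac{v_*(u_+-u_* )}{v_+-v_*}-\epsilon_2$. The limit is taken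 over parameters for which this solution exists. *)

(* Defs.v *)
From Stdlib Require Import Reals Lra.
Open Scope R_scope.

(* Two-shock Riemann solution of the perturbed Brio system with parameters
   e1 = epsilon_1, e2 = epsilon_2, Riemann data (um,vm) | (up,vp), and
   intermediate state (us,vs). *)
Definition two_shock (e1 e2 um vm up vp us vs : R) : Prop :=
  vs > Rmax vm vp /\ up < us < um /\
  us = um + (vs - vm) * ((e2 - sqrt (e2 ^ 2 + 4 * e1 * (vs + vm) ^ 2)) / (vs + vm)) /\
  up = us + (vp - vs) * ((e2 + sqrt (e2 ^ 2 + 4 * e1 * (vs + vp) ^ 2)) / (vs + vp)).

Definition sigma1 (e2 um vm us vs : R) : R :=
  um + vs * (us - um) / (vs - vm) - e2.
Definition sigma2 (e2 up vp us vs : R) : R :=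
  up + vs * (up - us) / (vp - vs) - e2.

(* Main.v *)
Require Import Defs.
From Stdlib Require Import Reals Lra Psatz.
Open Scope R_scope.

Lemma int_const (c a b : R) (pr : Riemann_integrable (fun _ : R => c) a b) :
  RiemannInt pr = c * (b - a).
Proof. exact (@RiemannInt_P15 a b c pr). Qed.

Lemma sqrt_diff (p q x1 x2 : R) : 0 < p -> 0 < q -> 0 <= x1 -> 0 <= x2 ->
  x2 * x2 - x1 * x1 = p * p - q * q -> x2 >= p -> x1 >= q ->
  Rabs (x2 - x1) <= Rabs (p - q).
Proof.
  intros. apply Rsqr_le_abs_0. unfold Rsqr.
  assert (Hs : x2 + x1 >= p + q) by lra.
  assert (E : (x2 - x1) * (x2 + x1) = (p - q) * (p + q)) by nra.
  destruct (Rle_dec ((x2 - x1) * (x2 - x1)) ((p - q) * (p - q))); auto.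
  exfalso.
  assert (((x2 - x1) * (x2 + x1)) * ((x2 - x1) * (x2 + x1)) >
          ((p - q) * (p + q)) * ((p - q) * (p + q))).
  { assert (0 < (p+q)*(p+q)) by nra.
    assert ((x2+x1)*(x2+x1) >= (p+q)*(p+q)) by nra.
    apply Rnot_le_gt in n.
    assert (0 <= (p - q) * (p - q)) by (pose proof (Rle_0_sqr (p - q)); unfold Rsqr in *; lra).
    replace ((x2 - x1) * (x2 + x1) * ((x2 - x1) * (x2 + x1))) with
      (((x2 - x1) * (x2 - x1)) * ((x2 + x1) * (x2 + x1))) by ring.
    replace ((p - q) * (p + q) * ((p - q) * (p + q))) with
      (((p - q) * (p - q)) * ((p + q) * (p + q))) by ring.
    apply Rge_gt_trans with (((x2 - x1) * (x2 - x1)) * ((p + q) * (p + q))).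
    - apply Rle_ge, Rmult_le_compat_l; lra.
    - apply Rmult_gt_compat_r; lra. }
  rewrite E in H6. lra.
Qed.

Theorem lemma5p4 (um vm up vp : R) (hvm : 0 < vm) (hvp : 0 < vp) (hu : up < um) :
  (forall eta : R, eta > 0 ->
     exists delta : R, delta > 0 /\
       forall e1 e2 us vs : R,
         0 < e1 < delta -> 0 < e2 < delta ->
         two_shock e1 e2 um vm up vp us vs ->
         forall pr : Riemann_integrable (fun _ : R => vs)
                       (sigma1 e2 um vm us vs) (sigma2 e2 up vp us vs),
           Rabs (RiemannInt pr
                 - ((um + up) / 2 * (vp - vm) - (up * vp - um * vm))) < eta) /\
  (um + up) / 2 * (vp - vm) - (up * vp - um * vm) = / 2 * (vm + vp) * (um - up).
Proof.
  split; [| field].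
  intros eta Heta.
  set (M := vm + vp).
  set (K := 3 * M + M * M + 1).
  assert (HK : 0 < K) by (unfold K, M; nra).
  set (t := Rmin 1 (eta / K)).
  assert (Ht0 : 0 < t) by (unfold t; apply Rmin_glb_lt; [lra | apply Rdiv_lt_0_compat; lra]).
  assert (Ht1 : t <= 1) by apply Rmin_l.
  assert (Ht2 : t <= eta / K) by apply Rmin_r.
  assert (HtK : K * t <= eta).
  { apply Rmult_le_reg_r with (/K). apply Rinv_0_lt_compat; lra.
    replace (K * t * / K) with t by (field; lra). exact Ht2. }
  exists (t * t). split; [nra|].
  intros e1 e2 us s He1 He2 [Hs [Hus [Eus Eup]]] pr.
  rewrite int_const.
  pose proof (Rmax_l vm vp). pose proof (Rmax_r vm vp).
  assert (Hsm : s > vm) by lra. assert (Hsp : s > vp) by lra.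
  set (S1 := sqrt (e2 ^ 2 + 4 * e1 * (s + vm) ^ 2)) in *.
  set (S2 := sqrt (e2 ^ 2 + 4 * e1 * (s + vp) ^ 2)) in *.
  assert (HS1 : 0 <= S1) by apply sqrt_pos.
  assert (HS2 : 0 <= S2) by apply sqrt_pos.
  assert (HS1s : S1 * S1 = e2 ^ 2 + 4 * e1 * (s + vm) ^ 2)
    by (unfold S1, S2; apply sqrt_sqrt; pose proof (pow2_ge_0 e2); pose proof (pow2_ge_0 (s+vm)); pose proof (pow2_ge_0 (s+vp)); nra).
  assert (HS2s : S2 * S2 = e2 ^ 2 + 4 * e1 * (s + vp) ^ 2)
    by (unfold S1, S2; apply sqrt_sqrt; pose proof (pow2_ge_0 e2); pose proof (pow2_ge_0 (s+vm)); pose proof (pow2_ge_0 (s+vp)); nra).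
  set (r := sqrt e1).
  assert (Hr0 : 0 <= r) by apply sqrt_pos.
  assert (Hrs : r * r = e1) by (unfold r; apply sqrt_sqrt; lra).
  assert (Hrt : r < t) by nra.
  assert (He2t : e2 < t) by nra.
  set (p := e2 / (s + vp)). set (q := e2 / (s + vm)).
  set (x1 := S1 / (s + vm)). set (x2 := S2 / (s + vp)).
  assert (Hp : 0 < p) by (unfold p; apply Rdiv_lt_0_compat; lra).
  assert (Hq : 0 < q) by (unfold q; apply Rdiv_lt_0_compat; lra).
  assert (Hx1 : 0 <= x1) by (unfold x1; apply Rmult_le_pos; [lra | left; apply Rinv_0_lt_compat; lra]).
  assert (Hx2 : 0 <= x2) by (unfold x2; apply Rmult_le_pos; [lra | left; apply Rinv_0_lt_compat; lra]).
  assert (Hx1s : x1 * x1 = q * q + 4 * e1) by (unfold x1, q;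
      replace (S1 / (s + vm) * (S1 / (s + vm))) with (S1 * S1 / ((s + vm) * (s + vm))) by (field; lra);
      rewrite HS1s; field; lra).
  assert (Hx2s : x2 * x2 = p * p + 4 * e1) by (unfold x2, p;
      replace (S2 / (s + vp) * (S2 / (s + vp))) with (S2 * S2 / ((s + vp) * (s + vp))) by (field; lra);
      rewrite HS2s; field; lra).
  assert (Hx1q : x1 >= q) by nra.
  assert (Hx2p : x2 >= p) by nra.
  assert (Hx1u : x1 <= q + 2 * r) by nra.
  assert (Hx2u : x2 <= p + 2 * r) by nra.
  assert (Hd : Rabs (x2 - x1) <= Rabs (p - q)) by (apply sqrt_diff; lra).
  assert (Hsp' : s * p <= e2).
  { unfold p. replace (s * (e2 / (s + vp))) with (e2 * (s / (s + vp))) by (field; lra).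
    assert (s / (s + vp) <= 1). { apply Rmult_le_reg_r with (s + vp); [lra|].
      replace (s / (s + vp) * (s + vp)) with s by (field; lra). lra. }
    nra. }
  assert (Hsq' : s * q <= e2).
  { unfold q. replace (s * (e2 / (s + vm))) with (e2 * (s / (s + vm))) by (field; lra).
    assert (s / (s + vm) <= 1). { apply Rmult_le_reg_r with (s + vm); [lra|].
      replace (s / (s + vm) * (s + vm)) with s by (field; lra). lra. }
    nra. }
  assert (Hvp' : vp * p <= e2).
  { unfold p. replace (vp * (e2 / (s + vp))) with (e2 * (vp / (s + vp))) by (field; lra).
    assert (vp / (s + vp) <= 1). { apply Rmult_le_reg_r with (s + vp); [lra|].
      replace (vp / (s + vp) * (s + vp)) with vp by (field; lra). lra. }
    nra. }
  assert (Hvq' : vm * q <= e2).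
  { unfold q. replace (vm * (e2 / (s + vm))) with (e2 * (vm / (s + vm))) by (field; lra).
    assert (vm / (s + vm) <= 1). { apply Rmult_le_reg_r with (s + vm); [lra|].
      replace (vm / (s + vm) * (s + vm)) with vm by (field; lra). lra. }
    nra. }
  set (a := x1 - q). set (b := p + x2).
  assert (Ea : (e2 - S1) / (s + vm) = - a) by (unfold a, x1, q; field; lra).
  assert (Eb : (e2 + S2) / (s + vp) = b) by (unfold b, x2, p; field; lra).
  rewrite Ea in Eus. rewrite Eb in Eup.
  unfold sigma1, sigma2.
  replace (s * (us - um) / (s - vm)) with (- s * a) by (rewrite Eus; field; lra).
  replace (s * (up - us) / (vp - s)) with (s * b) by (rewrite Eup; field; lra).
  rewrite Eus in Eup. subst up.
  match goal with |- Rabs ?X < _ => replace X with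
    (s * (vp - vm) * (b - a) / 2 + (vm + vp) * (vp * b + vm * a) / 2) by (subst us; field) end.
  pose proof (Rle_abs (x2 - x1)). pose proof (Rle_abs (- (x2 - x1))); rewrite Rabs_Ropp in *.
  assert (Hba0 : 0 <= b - a /\ s * (b - a) <= 2 * e2).
  { unfold a, b. destruct (Rcase_abs (p - q)).
    - rewrite (Rabs_left (p - q) r0) in Hd. split; [lra|].
      apply Rle_trans with (s * (2 * q)); [apply Rmult_le_compat_l; lra | lra].
    - rewrite (Rabs_right (p - q) r0) in Hd. split; [lra|].
      apply Rle_trans with (s * (2 * p)); [apply Rmult_le_compat_l; lra | lra]. }
  destruct Hba0 as [Hba0 Hba1].
  assert (Ha0 : 0 <= a) by (unfold a; lra).
  assert (Hb0 : 0 <= b) by (unfold b; lra).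
  assert (Ha1 : vm * a <= 2 * vm * r) by (unfold a; nra).
  assert (Hb1 : vp * b <= 2 * e2 + 2 * vp * r) by (unfold b; nra).
  replace (s * (vp - vm) * (b - a) / 2) with ((vp - vm) * (s * (b - a)) / 2) by (unfold Rdiv; ring).
  set (u := s * (b - a)) in *.
  assert (Hu0 : 0 <= u) by (unfold u; nra).
  assert (T1 : Rabs ((vp - vm) * u / 2) <= M * e2).
  { unfold Rdiv. rewrite !Rabs_mult. rewrite (Rabs_right u) by lra.
    rewrite (Rabs_right (/2)) by lra.
    assert (Rabs (vp - vm) <= M) by (unfold M; apply Rabs_le; lra).
    pose proof (Rabs_pos (vp - vm)). nra. }
  assert (T2 : 0 <= (vm + vp) * (vp * b + vm * a) / 2 <= M * e2 + M * M * r).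
  { fold M. split.
    - unfold M. apply Rmult_le_pos; [|lra]. apply Rmult_le_pos; nra.
    - unfold M in *. nra. }
  eapply Rle_lt_trans. apply Rabs_triang.
  rewrite (Rabs_right ((vm + vp) * (vp * b + vm * a) / 2)) by lra.
  assert (HM : 0 < M) by (unfold M; lra).
  assert (M * e2 + (M * e2 + M * M * r) < K * t).
  { unfold K. assert (M * e2 < M * t) by nra. assert (M * M * r < M * M * t).
    { apply Rmult_lt_compat_l; nra. } nra. }
  lra.
Qed.
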